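(* Let $A$ be a nontrivial closed class of decision tables from $\mathcal M_2^\infty$ and $\psi$ a bounded complexity measure. If $\mathcal H^\infty_{\psi,A}$ is everywhere defined, then for every $n\in\omega$ the value $G_{\psi,A}(n)$ is defined and $\mathcal H^\infty_{\psi,A}(n)\ge G_{\psi,A}(n)-1$.
   Context: Notation: $\omega=\{0,1,2,\dots\}$; $\mathcal P(\omega)$ is the set of nonempty finite subsets of $\omega$; $E_2=\{0,1\}$. $P=\{f_i:i\in\omega\}$ is a set of attributes, $f_i\neq f_j$ for $i\ne j$. Decision tables: $\mathcal M_2^\infty$ is the set of rectangular tables filled with numbers from $E_2$, whose columns are labeled with pairwise different attributes from $P$, whose rows are pairwise different, and each row of which is labeled with a set from $\mathcal P(\omega)$ (its set of decisions). The empty table (no rows) is denoted $\Lambda$ and belongs to $\mathcal M_2^\infty$. For $T\in\mathcal M_2^\infty$: $\Pi(T)$ is the intersection of the decision sets of all rows (common decisions); $\mathrm{At}(T)$ is the set of attributes labeling columns. For nonempty $T$, $\Omega_2(T)$ is the set of finite words (including the empty word $\lambda$) over the alphabet $\{(f_i,\delta):f_i\in\mathrm{At}(T),\delta\in E_2\}$; for $\alpha=(f_{i_1},\delta_1)\cdots(f_{i_m},\delta_m)$, $T\alpha$ is the subtable of $T$ consisting of the rows having value $\delta_j$ in the column $f_{i_j}$ for all $j$, and $T\lambda=T$. Operations: for $D\subseteq\mathrm{At}(T)$, $I(D,T)$ is obtained from $T$ by deleting the columns labeled with attributes from $D$ and, in each group of rows coinciding on the remaining columns, keeping only the first row; $I(\mathrm{At}(T),T)=\Lambda$.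 For $\nu:E_2^{|\mathrm{At}(T)|}\to\mathcal P(\omega)$, $J(\nu,T)$ is obtained by replacing the decision set of each row $\bar\delta$ by $\nu(\bar\delta)$. $[T]=\{J(\nu,I(D,T)):D\subseteq\mathrm{At}(T),\ \nu:E_2^{|\mathrm{At}(T)\setminus D|}\to\mathcal P(\omega)\}$; for nonempty $A\subseteq\mathcal M_2^\infty$, $[A]=\bigcup_{T\in A}[T]$. $A$ is a closed class if $[A]=A$; nontrivial if it contains a nonempty table. Decision trees: a $2$-decision tree is a finite directed rooted tree with at least two nodes in which the root and the edges leaving the root are unlabeled, each terminal node is labeled with a decision from $\omega$, and each other node is labeled with an attribute from $P$, each edge leaving such a node being labeled with a number from $E_2$. $\mathrm{At}(\Gamma)$ is the set of attributes labeling nodes of $\Gamma$. For a complete path $\tau=v_1,d_1,\dots,v_m,d_m,v_{m+1}$ (from the root to a terminal node), $\pi(\tau)=\lambda$ if $m=1$, and otherwise $\pi(\tau)=(f_{i_2},\delta_2)\cdots(f_{i_m},\delta_m)$ where $v_j$ is labeled $f_{i_j}$ and $d_j$ is labeled $\delta_j$; $T(\tau)=T\pi(\tau)$. For $T\ne\Lambda$, a nondeterministic decision tree for $T$ is a $2$-decision tree $\Gamma$ with $\mathrm{At}(\Gamma)\subseteq\mathrm{At}(T)$ such that every row of $T$ belongs to $T(\tau)$ for some complete path $\tau$, and for every complete path $\tau$ either $T(\tau)=\Lambda$ or the decision at the terminal node of $\tau$ belongs to $\Pi(T(\tau))$. A deterministic decision tree for $T$ is a nondeterministic decision tree for $T$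 in which, additionally, exactly one edge leaves the root and the edges leaving any node that is neither the root nor terminal are labeled with pairwise different numbers. Complexity measures: a partially bounded complexity measure is a function $\psi:P^*\to\omega$ on finite words over $P$ such that for all words $\alpha_1,\alpha_2$: $\psi(\alpha_1)=0$ iff $\alpha_1=\lambda$; $\psi(\alpha_1)$ is invariant under permutation of letters; $\psi(\alpha_1)\le\psi(\alpha_1\alpha_2)$; $\psi(\alpha_1\alpha_2)\le\psi(\alpha_1)+\psi(\alpha_2)$. It is bounded if in addition $\psi(\alpha)\ge|\alpha|$ for all $\alpha$. $\psi$ is extended to words $(f_{i_1},\delta_1)\cdots(f_{i_m},\delta_m)$ by $\psi(f_{i_1}\cdots f_{i_m})$ ($\psi(\lambda)=0$). For a $2$-decision tree $\Gamma$, $\psi(\Gamma)=\max_\tau\psi(\pi(\tau))$ over complete paths. For $T\ne\Lambda$, $\psi^d(T)$ (resp. $\psi^a(T)$) is the minimum of $\psi(\Gamma)$ over deterministic (resp. nondeterministic) decision trees $\Gamma$ for $T$; $\psi^d(\Lambda)=\psi^a(\Lambda)=0$. Parameters: $m_\psi(T)=\max\{\psi(f_i):f_i\in\mathrm{At}(T)\}$, $m_\psi(\Lambda)=0$. A word $\alpha\in\Omega_2(T)$ is annihilating for $T$ if $T\alpha=\Lambda$ and $\alpha$ contains no two letters $(f_i,\delta),(f_i,\sigma)$ with $\delta\ne\sigma$; it is irreducible if no word obtained from $\alpha$ by deleting some (at least one) letters is annihilating for $T$; $G(T)$ is the maximum length of an irreducible annihilating word for $T$ if one exists, and $0$ otherwise;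 $G(\Lambda)=0$. For $n\in\omega$: $A_\psi(n)=\{T\in A:m_\psi(T)\le n\}$; $G_{\psi,A}(n)$ is undefined if $\{G(T):T\in A_\psi(n)\}$ is infinite, else its maximum; $\mathcal H^\infty_{\psi,A}(n)$ is undefined if $\{\psi^d(T):T\in A,\psi^a(T)\le n\}$ is infinite, else its maximum. *)

(* Defs.v *)
From Stdlib Require Import ClassicalEpsilon.
From mathcomp Require Import all_boot finmap.
Set Implicit Arguments. Unset Strict Implicit. Unset Printing Implicit Defensive.
Local Open Scope fset_scope.

(* the least element of P (meaningful when P is nonempty) *)
Definition least_nat (P : nat -> Prop) : nat :=
  epsilon (inhabits 0) (fun k => P k /\ forall j, P j -> k <= j).
(* the greatest element of P (meaningful when P is finite and nonempty) *)
Definition max_nat (P : nat -> Prop) : nat :=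
  epsilon (inhabits 0) (fun k => P k /\ forall j, P j -> j <= k).
Definition finite_natset (P : nat -> Prop) : Prop :=
  exists s : seq nat, forall k, P k -> k \in s.

(* attribute f_i is represented by i : nat; a row is a 0/1 vector (seq bool)
   listed in column order, together with its decision set (in P(omega)). *)
Record table := Table { tcols : seq nat ; trows : seq (seq bool * {fset nat}) }.

Definition Lambda : table := Table [::] [::].

(* membership in M_2^infty *)
Definition wf_table (T : table) : bool :=
  [&& uniq (tcols T),
      all (fun r => size r.1 == size (tcols T)) (trows T),
      uniq (map fst (trows T)),
      all (fun r => r.2 != fset0) (trows T)
    & (trows T == [::]) == (tcols T == [::])].

Definition At (T : table) : seq nat := tcols T.

Definition value (T : table) (v : seq bool) (f : nat) : bool :=
  nth false v (index f (tcols T)).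

Definition word := seq (nat * bool).

Definition agrees (T : table) (v : seq bool) (a : word) : bool :=
  all (fun l => value T v l.1 == l.2) a.

Definition sub (T : table) (a : word) : table :=
  let rs := [seq r <- trows T | agrees T r.1 a] in
  if rs == [::] then Lambda else Table (tcols T) rs.

Definition in_Pi (d : nat) (T : table) : bool := all (fun r => d \in r.2) (trows T).

Definition remaining (D : seq nat) (T : table) : seq nat :=
  [seq f <- tcols T | f \notin D].

Definition proj (D : seq nat) (T : table) (v : seq bool) : seq bool :=
  [seq p.2 | p <- zip (tcols T) v & p.1 \notin D].

Fixpoint dedup_first (seen : seq (seq bool)) (s : seq (seq bool * {fset nat}))
  : seq (seq bool * {fset nat}) :=
  match s with
  | [::] => [::]
  | r :: s' => if r.1 \in seen then dedup_first seen s'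
               else r :: dedup_first (r.1 :: seen) s'
  end.

Definition opI (D : seq nat) (T : table) : table :=
  let c := remaining D T in
  if c == [::] then Lambda
  else Table c (dedup_first [::] [seq (proj D T r.1, r.2) | r <- trows T]).

Definition opJ (nu : seq bool -> {fset nat}) (T : table) : table :=
  Table (tcols T) [seq (r.1, nu r.1) | r <- trows T].

Definition in_span (T T' : table) : Prop :=
  exists (D : seq nat) (nu : seq bool -> {fset nat}),
    {subset D <= At T} /\
    (forall v : seq bool, size v = size (remaining D T) -> nu v != fset0) /\
    T' = opJ nu (opI D T).

Definition closure (A : table -> Prop) (T' : table) : Prop :=
  exists T, A T /\ in_span T T'.

Definition closed_class (A : table -> Prop) : Prop :=
  (forall T, A T -> wf_table T) /\ (exists T, A T) /\
  (forall T, closure A T <-> A T).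

Definition nontrivial (A : table -> Prop) : Prop :=
  exists T, A T /\ T <> Lambda.

Definition complexity_measure (psi : seq nat -> nat) : Prop :=
  [/\ forall a, psi a = 0 <-> a = [::],
      forall a b, perm_eq a b -> psi a = psi b,
      forall a b, psi a <= psi (a ++ b)
    & forall a b, psi (a ++ b) <= psi a + psi b].

Definition bounded_measure (psi : seq nat -> nat) : Prop :=
  complexity_measure psi /\ forall a, size a <= psi a.

(* a non-root node: terminal (decision) or attribute node with labelled edges *)
Inductive dnode := Leaf of nat | Node of nat & seq (bool * dnode).
(* a tree is given by the (unlabelled) edges leaving the (unlabelled) root *)
Definition dtree := seq dnode.

Fixpoint wf_node (t : dnode) : bool :=
  match t with
  | Leaf _ => true
  | Node _ ch => (0 < size ch) && all (fun e => wf_node e.2) ch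
  end.

Definition wf_tree (G : dtree) : bool := (0 < size G) && all wf_node G.

Fixpoint node_paths (t : dnode) : seq (word * nat) :=
  match t with
  | Leaf d => [:: ([::], d)]
  | Node f ch =>
      flatten [seq [seq ((f, e.1) :: p.1, p.2) | p <- node_paths e.2] | e <- ch]
  end.

Definition tree_paths (G : dtree) : seq (word * nat) := flatten (map node_paths G).

Fixpoint node_attrs (t : dnode) : seq nat :=
  match t with
  | Leaf _ => [::]
  | Node f ch => f :: flatten [seq node_attrs e.2 | e <- ch]
  end.

Definition tree_attrs (G : dtree) : seq nat := flatten (map node_attrs G).

Fixpoint det_node (t : dnode) : bool :=
  match t with
  | Leaf _ => true
  | Node _ ch => uniq (map fst ch) && all (fun e => det_node e.2) ch
  end.

Definition ndt_for (T : table) (G : dtree) : Prop :=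
  [/\ wf_tree G,
      {subset tree_attrs G <= At T},
      (forall r, r \in trows T -> exists2 p, p \in tree_paths G & r \in trows (sub T p.1))
    & (forall p, p \in tree_paths G -> sub T p.1 = Lambda \/ in_Pi p.2 (sub T p.1))].

Definition dt_for (T : table) (G : dtree) : Prop :=
  [/\ ndt_for T G, size G = 1 & all det_node G].

Definition psi_word (psi : seq nat -> nat) (a : word) : nat := psi (map fst a).

Definition tree_cost (psi : seq nat -> nat) (G : dtree) : nat :=
  \max_(p <- tree_paths G) psi_word psi p.1.

Definition psi_d (psi : seq nat -> nat) (T : table) : nat :=
  if excluded_middle_informative (T = Lambda) then 0
  else least_nat (fun k => exists G, dt_for T G /\ tree_cost psi G = k).

Definition psi_a (psi : seq nat -> nat) (T : table) : nat :=
  if excluded_middle_informative (T = Lambda) then 0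
  else least_nat (fun k => exists G, ndt_for T G /\ tree_cost psi G = k).

Definition m_psi (psi : seq nat -> nat) (T : table) : nat :=
  \max_(f <- tcols T) psi [:: f].

Definition consistent (a : word) : Prop :=
  forall l1 l2, l1 \in a -> l2 \in a -> l1.1 = l2.1 -> l1.2 = l2.2.

Definition annihilating (T : table) (a : word) : Prop :=
  [/\ {subset map fst a <= At T}, sub T a = Lambda & consistent a].

Definition irreducible (T : table) (a : word) : Prop :=
  annihilating T a /\
  forall b : word, subseq b a -> size b < size a -> ~ annihilating T b.

Definition G_tab (T : table) : nat :=
  if excluded_middle_informative (T = Lambda) then 0
  else if excluded_middle_informative (exists a, irreducible T a)
  then max_nat (fun k => exists a, irreducible T a /\ size a = k)
  else 0.

Definition A_psi (psi : seq nat -> nat) (A : table -> Prop) (n : nat) (T : table) : Prop :=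
  A T /\ m_psi psi T <= n.

Definition G_set psi A n (k : nat) : Prop := exists T, A_psi psi A n T /\ G_tab T = k.
Definition G_defined psi A n : Prop := finite_natset (G_set psi A n).
Definition G_psiA psi A n : nat := max_nat (G_set psi A n).

Definition H_set psi A n (k : nat) : Prop :=
  exists T, A T /\ psi_a psi T <= n /\ psi_d psi T = k.
Definition H_defined psi A n : Prop := finite_natset (H_set psi A n).
Definition H_psiA psi A n : nat := max_nat (H_set psi A n).

(* Main.v *)
Require Import Defs.
From mathcomp Require Import all_boot finmap.
From Stdlib Require Import ClassicalEpsilon Classical.
Set Implicit Arguments. Unset Strict Implicit. Unset Printing Implicit Defensive.
Local Open Scope fset_scope.

Lemma least_exists (P : nat -> Prop) k : P k ->
  exists m, P m /\ forall j, P j -> m <= j.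
Proof.
move=> Pk; apply: NNPP => Hn.
suff H : forall N j, j <= N -> ~ P j by exact: (H k k (leqnn k) Pk).
elim=> [|N IH] j.
- rewrite leqn0 => /eqP -> P0; apply: Hn; exists 0; split => // ?.
- move=> hj Pj; case: (leqP j N) => [hjN|hNj]; first exact: IH hjN Pj.
  have ej : j = N.+1 by apply/eqP; rewrite eqn_leq hj hNj.
  apply: Hn; exists j; split => // i Pi; case: (leqP j i) => // hij.
  by exfalso; apply: (IH i); [rewrite -ltnS -ej|].
Qed.

Lemma least_spec (P : nat -> Prop) k : P k ->
  P (least_nat P) /\ least_nat P <= k.
Proof.
move=> Pk; rewrite /least_nat.
have [m Hm] := least_exists Pk.
have := epsilon_spec (inhabits 0) (fun k => P k /\ forall j, P j -> k <= j) (ex_intro _ m Hm).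
by case=> H1 H2; split => //; apply: H2.
Qed.

Lemma max_exists (P : nat -> Prop) B k : P k -> (forall j, P j -> j <= B) ->
  exists m, P m /\ forall j, P j -> j <= m.
Proof.
elim: B => [|B IH] Pk HB.
- by exists k; split => // j /HB; rewrite leqn0 => /eqP ->.
- case: (classic (P B.+1)) => [PB|nPB]; first by exists B.+1.
  apply: (IH Pk) => j Pj; have := HB j Pj; rewrite leq_eqVlt; case/orP=> [/eqP E|] //.
  by rewrite E in Pj.
Qed.

Lemma max_spec (P : nat -> Prop) B k : P k -> (forall j, P j -> j <= B) ->
  P (max_nat P) /\ forall j, P j -> j <= max_nat P.
Proof.
move=> Pk HB; have [m Hm] := max_exists Pk HB.
exact: (epsilon_spec (inhabits 0) (fun k => P k /\ forall j, P j -> j <= k) (ex_intro _ m Hm)).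
Qed.

Lemma finite_bound (P : nat -> Prop) : finite_natset P ->
  exists B, forall j, P j -> j <= B.
Proof.
case=> s Hs; exists (\max_(x <- s) x) => j /Hs js.
exact: (leq_bigmax_seq (F := id) j js isT).
Qed.

Lemma bound_finite (P : nat -> Prop) B : (forall j, P j -> j <= B) -> finite_natset P.
Proof. by move=> HB; exists (iota 0 B.+1) => k /HB; rewrite mem_iota add0n ltnS. Qed.

Lemma sub_rows T w x : x \in trows (sub T w) -> x \in trows T /\ agrees T x.1 w.
Proof.
rewrite /sub; case: ifP => _ //=.
by rewrite mem_filter => /andP[].
Qed.

Lemma sub_in T w x : x \in trows T -> agrees T x.1 w -> x \in trows (sub T w).
Proof.
move=> xT ag; rewrite /sub; case: ifP => [/eqP E|_ /=].
- have : x \in [seq r <- trows T | agrees T r.1 w] by rewrite mem_filter ag.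
  by rewrite E.
- by rewrite mem_filter ag.
Qed.

Lemma sub_Lambda T w : sub T w = Lambda -> forall x, x \in trows T -> ~~ agrees T x.1 w.
Proof.
move=> E x xT; apply/negP => ag.
by have := sub_in xT ag; rewrite E.
Qed.

Lemma sub_nLambda T w : sub T w <> Lambda -> exists2 x, x \in trows T & agrees T x.1 w.
Proof.
rewrite /sub; case: ifP => [_ //|].
case E: [seq r <- trows T | agrees T r.1 w] => [|x s] //= _ _.
have : x \in [seq r <- trows T | agrees T r.1 w] by rewrite E mem_head.
by rewrite mem_filter => /andP[a b]; exists x.
Qed.

Lemma dedup_sub seen s x : x \in dedup_first seen s -> x \in s.
Proof.
elim: s seen => [|y s IH] seen //=.
case: ifP => _.
- by move/IH; rewrite in_cons orbC => ->.
- by rewrite !in_cons => /orP[->|/IH ->] //; rewrite orbT.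
Qed.

Lemma dedup_cover seen s y : y \in s -> y.1 \notin seen ->
  exists2 x, x \in dedup_first seen s & x.1 = y.1.
Proof.
elim: s seen => [|z s IH] seen //=.
rewrite in_cons => /orP[/eqP ->|ys] hy.
- by rewrite (negbTE hy); exists z => //; rewrite mem_head.
- case: ifP => hz; first exact: IH.
  case: (eqVneq y.1 z.1) => [e|ne]; first by exists z; rewrite ?mem_head.
  have [|x xin ex] := IH (z.1 :: seen) ys; first by rewrite in_cons negb_or ne.
  by exists x => //; rewrite in_cons xin orbT.
Qed.

Lemma proj_value (c D : seq nat) (v : seq bool) f : f \in c -> f \notin D ->
  nth false [seq p.2 | p <- zip c v & p.1 \notin D] (index f [seq g <- c | g \notin D])
  = nth false v (index f c).
Proof.
elim: c v => [|x c IH] v //= fc fD.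
case: v => [|b v] /=.
- by rewrite !nth_nil.
case: (eqVneq x f) => [e|ne].
- by subst x; rewrite fD /= eqxx.
- move: fc; rewrite in_cons => /orP[/eqP E|fc]; first by rewrite E eqxx in ne.
  have ne' : (f == x) = false by rewrite eq_sym (negbTE ne).
  case: ifP => hx /=; rewrite ?(negbTE ne) ?ne' /=; exact: IH.
Qed.

Definition dnode_ind2 (P : dnode -> Prop) (HL : forall d, P (Leaf d))
  (HN : forall f ch, (forall e, List.In e ch -> P e.2) -> P (Node f ch)) : forall t, P t :=
  fix F t := match t with
  | Leaf d => HL d
  | Node f ch => HN f ch ((fix G (l : seq (bool * dnode)) : forall e, List.In e l -> P e.2 :=
       match l with
       | [::] => fun e H => match H with end
       | x :: l' => fun e H => match H with
                   | or_introl Hx => eq_ind x (fun y => P y.2) (F x.2) e Hx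
                   | or_intror H' => G l' e H' end
       end) ch)
  end.

Lemma in_flatten_map (A : Type) (B : eqType) (F : A -> seq B) (l : seq A) y :
  y \in flatten (map F l) -> exists e, List.In e l /\ y \in F e.
Proof.
elim: l => [|x l IH] //=; rewrite mem_cat => /orP[h|/IH [e [h1 h2]]].
- by exists x; split => //; left.
- by exists e; split => //; right.
Qed.

Lemma in_flatten_map2 (A : Type) (B : eqType) (F : A -> seq B) (l : seq A) y e :
  List.In e l -> y \in F e -> y \in flatten (map F l).
Proof.
elim: l => [|x l IH] //= [<-|h] hy; rewrite mem_cat ?hy //.
by rewrite IH ?orbT.
Qed.

Lemma all_In (A : Type) (P : pred A) l x : all P l -> List.In x l -> P x.
Proof. by elim: l => [|y l IH] //= /andP[h1 h2] [<-|/IH]; auto. Qed.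

Lemma In_map_mem (A : Type) (B : eqType) (f : A -> B) l x : List.In x l -> f x \in map f l.
Proof. by elim: l => [|y l IH] //= [<-|/IH h]; rewrite in_cons ?eqxx // h orbT. Qed.

Lemma uniq_edge (ch : seq (bool * dnode)) e e' : uniq (map fst ch) ->
  List.In e ch -> List.In e' ch -> e.1 = e'.1 -> e = e'.
Proof.
elim: ch => [|x ch IH] //= /andP[nx u] [<-|h] [<-|h'] E //.
- by move: nx; rewrite E (In_map_mem fst h').
- by move: nx; rewrite -E (In_map_mem fst h).
- exact: IH.
Qed.
Lemma size_filter_fst (K : seq (nat * bool)) f : uniq (map fst K) ->
  size K <= (size [seq l <- K | l.1 != f]).+1.
Proof.
move=> u; rewrite size_filter.
have h1 := count_predC (fun l : nat * bool => l.1 != f) K.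
have h2 : count (predC (fun l : nat * bool => l.1 != f)) K <= 1.
  have -> : count (predC (fun l : nat * bool => l.1 != f)) K = count_mem f (map fst K).
    by rewrite count_map; apply: eq_count => l /=; rewrite negbK.
  by rewrite count_uniq_mem // leq_b1.
by rewrite -h1 -addn1 leq_add2l.
Qed.

Lemma lb (Tt : table) (S : seq nat) (Rv : nat * bool -> seq bool -> Prop) t :
  det_node t -> {subset node_attrs t <= S} ->
  forall K : seq (nat * bool), uniq (map fst K) ->
  (forall l l' v v' f, l \in K -> l' \in K -> Rv l v -> Rv l' v' -> f \in S ->
      f != l.1 -> f != l'.1 -> value Tt v f = value Tt v' f) ->
  (forall l, l \in K -> exists v, Rv l v /\
      exists2 p, p \in node_paths t & agrees Tt v p.1 /\ p.2 = l.1) ->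
  size K <= 1 \/ exists2 p, p \in node_paths t & size K <= (size p.1).+1.
Proof.
elim/dnode_ind2: t => [d|f ch IH] /= det sub K u Hval Hcov.
- left; clear Hval; case: K u Hcov => [|l1 [|l2 K]] //= /andP[nu _] Hcov.
  have [v1 [_ [p1 + [_ e1]]]] := Hcov l1 (mem_head _ _).
  have l2in : l2 \in [:: l1, l2 & K] by rewrite !in_cons eqxx orbT.
  have [v2 [_ [p2 + [_ e2]]]] := Hcov l2 l2in.
  rewrite !in_cons !in_nil !orbF => /eqP E1 /eqP E2.
  by move: nu; rewrite in_cons -e1 -e2 E1 E2 eqxx.
- move: det => /andP[uch dch].
  have fS : f \in S by apply: sub; rewrite mem_head.
  set K' := [seq l <- K | l.1 != f].
  have hK := size_filter_fst f u.
  case E: K' => [|l0 K0].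
  + by left; move: hK; rewrite -/K' E.
  have l0K' : l0 \in K' by rewrite E mem_head.
  have decomp : forall l, l \in K' -> exists v, Rv l v /\ exists e, List.In e ch /\
      value Tt v f = e.1 /\ exists2 p', p' \in node_paths e.2 & agrees Tt v p'.1 /\ p'.2 = l.1.
    move=> l; rewrite mem_filter => /andP[lf lK].
    have [v [Rl [p pin [ag e2]]]] := Hcov l lK.
    have [e [ein pe]] := in_flatten_map pin.
    move/mapP: pe => [p' p'in ep]; subst p.
    exists v; split => //; exists e; split => //.
    move: ag => /= /andP[/eqP h1 h2]; split => //; by exists p'.
  have [v0 [R0 [e0 [e0in [val0 _]]]]] := decomp l0 l0K'.
  have Hcov' : forall l, l \in K' -> exists v, Rv l v /\
      exists2 p, p \in node_paths e0.2 & agrees Tt v p.1 /\ p.2 = l.1.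
    move=> l lK'; have [v [Rl [e [ein [vale [p' p'in hp']]]]]] := decomp l lK'.
    exists v; split => //.
    move: lK' l0K'; rewrite !mem_filter => /andP[lf lK] /andP[l0f l0K].
    have ee : e = e0.
      apply: (uniq_edge uch ein e0in).
      rewrite -vale -val0; apply: (Hval l l0) => //; by rewrite eq_sym.
    by subst e; exists p'.
  have u' : uniq (map fst K').
    have -> : K' = filter (preim fst (predC1 f)) K by [].
    by rewrite -filter_map filter_uniq.
  have sub' : {subset node_attrs e0.2 <= S}.
    move=> g gin; apply: sub; rewrite in_cons; apply/orP; right.
    exact: (in_flatten_map2 (F := fun e : bool * dnode => node_attrs e.2) e0in).
  have Hval' : forall l l' v v' g, l \in K' -> l' \in K' -> Rv l v -> Rv l' v' -> g \in S ->
      g != l.1 -> g != l'.1 -> value Tt v g = value Tt v' g.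
    move=> l l' v v' g; rewrite !mem_filter => /andP[_ lK] /andP[_ l'K]; exact: Hval.
  have [v1 [_ [e1 [e1in [_ [p1 p1in _]]]]]] := decomp l0 l0K'.
  have pin1 : ((f, e1.1) :: p1.1, p1.2) \in node_paths (Node f ch).
    apply: (in_flatten_map2 (F := fun e : bool * dnode =>
         [seq ((f, e.1) :: p.1, p.2) | p <- node_paths e.2]) e1in).
    by apply/mapP; exists p1.
  right.
  case: (IH e0 e0in (all_In dch e0in) sub' K' u' Hval' Hcov') => [hs|[p pin hp]].
  + exists ((f, e1.1) :: p1.1, p1.2) => //=.
    by apply: (leq_trans hK); rewrite ltnS (leq_trans hs).
  + exists ((f, e0.1) :: p.1, p.2).
    * apply: (in_flatten_map2 (F := fun e : bool * dnode =>
         [seq ((f, e.1) :: p.1, p.2) | p <- node_paths e.2]) e0in).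
      by apply/mapP; exists p.
    * by rewrite /= (leq_trans hK).
Qed.

Definition dec (a : word) (w : word) : nat := head 0 [seq l.1 | l <- a & (l.1, ~~ l.2) \in w].
Fixpoint build (a : word) (rest : word) (pre : word) : dnode :=
  match rest with
  | [::] => Leaf (dec a pre)
  | l :: r => Node l.1 [:: (true, build a r (rcons pre (l.1, true)));
                         (false, build a r (rcons pre (l.1, false)))]
  end.

Lemma build_det a rest pre : det_node (build a rest pre) && wf_node (build a rest pre).
Proof.
elim: rest pre => [|l r IH] pre //=.
by case/andP: (IH (rcons pre (l.1, true))) => -> ->; case/andP: (IH (rcons pre (l.1, false))) => -> ->.
Qed.

Lemma build_attrs a rest pre : {subset node_attrs (build a rest pre) <= map fst rest}.
Proof.
elim: rest pre => [|l r IH] pre //= x; rewrite !in_cons => /orP[->//|].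
by rewrite cats0 mem_cat => /orP[/IH ->|/IH ->]; rewrite orbT.
Qed.

Lemma build_paths a rest pre p : p \in node_paths (build a rest pre) ->
  map fst p.1 = map fst rest /\ p.2 = dec a (pre ++ p.1).
Proof.
elim: rest pre p => [|l r IH] pre p /=.
- by rewrite in_cons in_nil orbF => /eqP -> /=; rewrite cats0.
- rewrite cats0 mem_cat => /orP[]/mapP[q qin ->] /=;
  have [h1 h2] := IH _ _ qin; by rewrite h1 h2 cat_rcons.
Qed.

Lemma build_cover a rest pre (g : nat -> bool) :
  ([seq (l.1, g l.1) | l <- rest], dec a (pre ++ [seq (l.1, g l.1) | l <- rest]))
    \in node_paths (build a rest pre).
Proof.
elim: rest pre => [|l r IH] pre /=; first by rewrite cats0 mem_head.
rewrite cats0 mem_cat; apply/orP.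
case E: (g l.1); [left|right]; apply/mapP;
  (eexists; first exact: IH); rewrite /= cat_rcons; done.
Qed.

Definition Dset (T : table) (a : word) := [seq f <- tcols T | f \notin map fst a].
Definition Ccols T a := remaining (Dset T a) T.
Definition valC (C : seq nat) (v : seq bool) f := nth false v (index f C).
Definition sdiff (C : seq nat) (a : word) v := [seq l.1 | l <- a & valC C v l.1 != l.2].
Definition nu_of C a (v : seq bool) : {fset nat} :=
  if sdiff C a v == [::] then [fset 0%N] else seq_fset tt (sdiff C a v).
Definition Tp T a := opJ (nu_of (Ccols T a) a) (opI (Dset T a) T).

Lemma nu_neq0 C a v : nu_of C a v != fset0.
Proof.
rewrite /nu_of; case: ifP => [_|].
- by apply/negP => /eqP E; have := in_fset1 0%N 0%N; rewrite E in_fset0 eqxx.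
- case E: (sdiff C a v) => [|x s] // _; apply/negP => /eqP E2.
  by have := seq_fsetE tt (x :: s) x; rewrite E2 in_fset0 mem_head.
Qed.

Lemma nu_in C a v d : d \in sdiff C a v -> d \in nu_of C a v.
Proof.
rewrite /nu_of; case: ifP => [/eqP -> //|_ h]; by rewrite seq_fsetE.
Qed.

Lemma nu_out C a v d : d \in nu_of C a v -> sdiff C a v != [::] -> d \in sdiff C a v.
Proof. by rewrite /nu_of; case: ifP => [/eqP -> //|_]; rewrite seq_fsetE. Qed.

Lemma Ccols_mem T a f : {subset map fst a <= tcols T} -> f \in map fst a -> f \in Ccols T a.
Proof.
move=> sa fa; rewrite /Ccols /remaining mem_filter sa // andbT /Dset mem_filter fa.
by [].
Qed.

Lemma Tp_cols T a : a != [::] -> {subset map fst a <= tcols T} -> tcols (Tp T a) = Ccols T a.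
Proof.
case: a => [|l a] // _ sa; rewrite /Tp /opI /=.
have : l.1 \in Ccols T (l :: a) by apply: Ccols_mem => //; rewrite mem_head.
rewrite -/(Ccols T (l :: a)); case: (Ccols T (l :: a)) => //.
Qed.

Lemma Tp_rows T a x : x \in trows (Tp T a) ->
  exists2 r, r \in trows T & x = (proj (Dset T a) T r.1, nu_of (Ccols T a) a (proj (Dset T a) T r.1)).
Proof.
rewrite /Tp /opI; case: ifP => _ //= /mapP[y yin ->].
have /mapP[r rin ->] := dedup_sub yin.
by exists r.
Qed.

Lemma Tp_in T a r : a != [::] -> {subset map fst a <= tcols T} -> r \in trows T ->
  (proj (Dset T a) T r.1, nu_of (Ccols T a) a (proj (Dset T a) T r.1)) \in trows (Tp T a).
Proof.
case: a => [|l a] // _ sa rin; rewrite /Tp /opI.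
have : l.1 \in Ccols T (l :: a) by apply: Ccols_mem => //; rewrite mem_head.
rewrite /Ccols; case: ifP => [/eqP -> //|_ _ /=].
have yin : (proj (Dset T (l :: a)) T r.1, r.2) \in
   [seq (proj (Dset T (l :: a)) T r0.1, r0.2) | r0 <- trows T] by apply/mapP; exists r.
have [x xin ex] := dedup_cover (seen := [::]) yin isT.
apply/mapP; exists x => //; by rewrite ex.
Qed.

Lemma Tp_value T a v f : a != [::] -> {subset map fst a <= tcols T} -> f \in map fst a ->
  value (Tp T a) (proj (Dset T a) T v) f = value T v f.
Proof.
move=> an sa fa; rewrite /value Tp_cols //.
apply: proj_value; first exact: sa.
by rewrite /Dset mem_filter fa.
Qed.

Lemma Tp_valC T a v f : a != [::] -> {subset map fst a <= tcols T} ->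
  value (Tp T a) v f = valC (Ccols T a) v f.
Proof. by move=> an sa; rewrite /value Tp_cols. Qed.

Lemma in_Pi_intro d X : (forall y, y \in trows X -> d \in y.2) -> in_Pi d X.
Proof.
rewrite /in_Pi; case: X => c rs /=; elim: rs => [|y rs IH] //= H.
rewrite H ?mem_head //=; apply: IH => z zin; apply: H; by rewrite in_cons zin orbT.
Qed.

Lemma in_Pi_elim d X y : in_Pi d X -> y \in trows X -> d \in y.2.
Proof.
rewrite /in_Pi; case: X => c rs /=; elim: rs => [|z rs IH] //= /andP[h1 h2].
by rewrite in_cons => /orP[/eqP ->|/IH]; auto.
Qed.

Lemma uniq_from_rem (s : seq (nat * bool)) : (forall l, l \in s -> l \notin rem l s) -> uniq s.
Proof.
elim: s => [|x s IH] //= H.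
have hx := H x (mem_head _ _); rewrite /= eqxx in hx; rewrite hx /=.
apply: IH => l ls; case: (eqVneq l x) => [E|ne]; first by subst l; rewrite (negbTE hx) in ls.
have ls' : l \in x :: s by rewrite in_cons ls orbT.
have := H l ls'; rewrite /= eq_sym (negbTE ne) in_cons negb_or.
by case/andP.
Qed.

Lemma sub_eq T a b : a =i b -> sub T a = sub T b.
Proof.
move=> e; rewrite /sub.
have -> : [seq r <- trows T | agrees T r.1 a] = [seq r <- trows T | agrees T r.1 b] by
  apply: eq_filter => r; rewrite /agrees (eq_all_r e).
by [].
Qed.

Lemma irr_uniq T a : irreducible T a -> uniq a.
Proof.
case=> [[sa Ea ca] Hirr]; apply: uniq_from_rem => l la; apply/negP => lr.
have e : rem l a =i a.
  move=> x; apply/idP/idP; first exact: mem_rem.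
  case: (eqVneq x l) => [->//|ne]; rewrite (perm_mem (perm_to_rem la)) in_cons.
  by rewrite (negbTE ne).
apply: (Hirr (rem l a) (rem_subseq l a)).
  by rewrite size_rem // prednK // lt0n size_eq0; apply/eqP => E; rewrite E in la.
split.
- move=> f /mapP[x xin ->]; apply: sa; apply/mapP; exists x => //; by rewrite -e.
- by rewrite (sub_eq T e).
- move=> l1 l2 h1 h2; apply: ca; by rewrite -e.
Qed.

Lemma irr_row T a l : irreducible T a -> l \in a ->
  exists2 r, r \in trows T &
    (forall l', l' \in a -> l' != l -> value T r.1 l'.1 = l'.2) /\ value T r.1 l.1 != l.2.
Proof.
move=> Hi la; have ua := irr_uniq Hi; case: Hi => [[sa Ea ca] Hirr].
have e := mem_rem_uniq l ua.
have nsub : sub T (rem l a) <> Lambda.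
  move=> E; apply: (Hirr (rem l a) (rem_subseq l a)).
    by rewrite size_rem // prednK // lt0n size_eq0; apply/eqP => E'; rewrite E' in la.
  split => //.
  - move=> f /mapP[x xin ->]; apply: sa; apply/mapP; exists x => //; exact: mem_rem xin.
  - move=> l1 l2 h1 h2; apply: ca; [exact: (mem_rem h1)|exact: (mem_rem h2)].
have [r rin ag] := sub_nLambda nsub.
exists r => //.
have H1 : forall l', l' \in a -> l' != l -> value T r.1 l'.1 = l'.2.
  move=> l' l'a ne; have l'r : l' \in rem l a by rewrite e; apply/andP.
  by move/allP: ag => /(_ l' l'r) /eqP.
split => //; apply/negP => /eqP H2.
have := sub_Lambda Ea rin; rewrite /agrees; move/negP; apply; apply/allP => l' l'a.
case: (eqVneq l' l) => [->|ne]; first by rewrite H2.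
by rewrite H1.
Qed.

Lemma main_bound (A : table -> Prop) psi n T a :
  closed_class A -> bounded_measure psi -> H_defined psi A n -> A T -> m_psi psi T <= n ->
  irreducible T a -> size a - 1 <= H_psiA psi A n.
Proof.
move=> [wfA [[T0 A0] clA]] [cm bnd] Hdef AT mT Hi.
case: (leqP (size a) 1) => [h|h2].
  have -> : size a - 1 = 0 by apply/eqP; rewrite subn_eq0.
  by [].
have an : a != [::] by case: a h2 Hi.
have ua := irr_uniq Hi.
have [[sa Ea ca] _] := Hi.
have ufa : uniq (map fst a).
  rewrite map_inj_in_uniq // => -[f1 b1] [f2 b2] i1 i2 /= E; subst f2.
  by have /= -> := ca _ _ i1 i2 erefl.
pose D := Dset T a; pose C := Ccols T a; pose T' := Tp T a.
have AT' : A T'.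
  apply/clA; exists T; split => //; exists D, (nu_of C a); split.
    by move=> f; rewrite mem_filter => /andP[].
  by split => // v _; exact: nu_neq0.
have colsT' : tcols T' = C by exact: Tp_cols.
have aC : forall f, f \in map fst a -> f \in C by move=> f; exact: Ccols_mem.
pose G1 := [seq Node l.1 [:: (~~ l.2, Leaf l.1)] | l <- a].
have pathsG1 : forall p, p \in tree_paths G1 -> exists2 l, l \in a & p = ([:: (l.1, ~~ l.2)], l.1).
  move=> p; rewrite /tree_paths /G1 -map_comp => /flattenP [s /mapP[l la ->]].
  by rewrite /= in_cons in_nil orbF => /eqP ->; exists l.
have paths2 : forall l, l \in a -> ([:: (l.1, ~~ l.2)], l.1) \in tree_paths G1.
  move=> l la; rewrite /tree_paths /G1 -map_comp; apply/flattenP.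
  exists [:: ([:: (l.1, ~~ l.2)], l.1)]; last by rewrite mem_head.
  by apply/mapP; exists l.
have ndt1 : ndt_for T' G1.
  split.
  - rewrite /wf_tree size_map lt0n size_eq0 an /= all_map; by apply/allP.
  - move=> x; rewrite /tree_attrs /G1 -map_comp => /flattenP [s /mapP[l la ->]].
    rewrite /= in_cons in_nil orbF => /eqP ->; rewrite /At colsT'; apply: aC.
    exact: map_f.
  - move=> r rin; have [r0 r0in er] := Tp_rows rin.
    have := sub_Lambda Ea r0in; rewrite /agrees => /allPn [l la hl].
    exists ([:: (l.1, ~~ l.2)], l.1); first exact: paths2.
    apply: sub_in => //; rewrite /agrees /= andbT er /= Tp_value //; last exact: map_f.
    by move: hl; case: (value T r0.1 l.1); case: (l.2).
  - move=> p /pathsG1 [l la ->]; right; apply: in_Pi_intro => y /sub_rows [yin ag].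
    have [r0 r0in ey] := Tp_rows yin.
    move: ag; rewrite ey /agrees /= andbT => /eqP hv.
    apply: nu_in; apply/mapP; exists l => //; rewrite mem_filter la andbT.
    by rewrite -Tp_valC // hv; case: (l.2).
have psia : psi_a psi T' <= n.
  rewrite /psi_a; destruct (excluded_middle_informative (T' = Lambda)) as [e0|ne0]; first by [].
  have [_ h] := least_spec (P := fun k => exists G, ndt_for T' G /\ tree_cost psi G = k)
      (ex_intro _ G1 (conj ndt1 erefl)).
  apply: (leq_trans h); apply/bigmax_leqP_seq => p /pathsG1 [l la ->] _.
  rewrite /psi_word /=; apply: leq_trans mT.
  apply: (leq_bigmax_seq (F := fun f => psi [:: f])) => //; apply: sa; exact: map_f.
pose t2 := build a a [::].
have tp2 : tree_paths [:: t2] = node_paths t2 by rewrite /tree_paths /= cats0.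
have dt2 : dt_for T' [:: t2].
  have [dt wft] := andP (build_det a a [::]).
  split => //; last by rewrite /= dt.
  split.
  - by rewrite /wf_tree /= wft.
  - move=> x; rewrite /tree_attrs /= cats0 => /build_attrs xa.
    by rewrite /At colsT'; apply: aC.
  - move=> r rin; rewrite tp2.
    exists ([seq (l.1, value T' r.1 l.1) | l <- a],
            dec a ([::] ++ [seq (l.1, value T' r.1 l.1) | l <- a])).
      exact: build_cover.
    apply: sub_in => //=; rewrite /agrees; apply/allP => x /mapP[l _ ->] /=.
    by rewrite eqxx.
  - move=> p; rewrite tp2 => /build_paths [hm hd]; right.
    apply: in_Pi_intro => y /sub_rows [yin ag].
    have [r0 r0in ey] := Tp_rows yin.
    rewrite hd /= /dec.
    case E: [seq l.1 | l <- a & (l.1, ~~ l.2) \in p.1] => [|d s] /=.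
    + exfalso; have := sub_Lambda Ea r0in; move/negP; apply.
      apply/allP => l la.
      have : l.1 \in map fst p.1 by rewrite hm; exact: map_f.
      case/mapP => x xin ex.
      have hx : value T' y.1 x.1 = x.2 by move/allP: ag => /(_ x xin) /eqP.
      have nx : (l.1, ~~ l.2) \notin p.1.
        apply/negP => h; have : l.1 \in [seq l.1 | l <- a & (l.1, ~~ l.2) \in p.1].
          by apply: map_f; rewrite mem_filter h.
        by rewrite E.
      have x2 : x.2 = l.2.
        move: nx; case: x xin ex hx => x1 x2 /= xin ex _.
        have : x2 = ~~ l.2 \/ x2 = l.2 by case: (x2); case: (l.2); auto.
        case=> // e2; by rewrite ex -e2 xin.
      have ev : value T' y.1 l.1 = l.2 by rewrite ex hx.
      move: ev; rewrite ey /= Tp_value //; [by move->| exact: map_f].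
    + have : d \in [seq l.1 | l <- a & (l.1, ~~ l.2) \in p.1] by rewrite E mem_head.
      case/mapP => l; rewrite mem_filter => /andP[hin la] ->.
      have hv : value T' y.1 l.1 = ~~ l.2 by move/allP: ag => /(_ _ hin) /eqP.
      rewrite ey /=; apply: nu_in; apply/mapP; exists l => //; rewrite mem_filter la andbT.
      move: hv; rewrite ey /= => hv.
      by rewrite -Tp_valC // hv; case: (l.2).
have [l0 l0a] : exists l0, l0 \in a by case: (a) an => [|l0 a'] // _; exists l0; rewrite mem_head.
have nLT' : T' <> Lambda.
  move=> E; have [r rin _] := irr_row Hi l0a.
  by have := Tp_in an sa rin; rewrite -/T' E.
set Pd := fun k => exists G, dt_for T' G /\ tree_cost psi G = k.
have [HPd _] := least_spec (P := Pd) (ex_intro _ [:: t2] (conj dt2 erefl)).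
have psid : psi_d psi T' = least_nat Pd.
  by rewrite /psi_d; destruct (excluded_middle_informative (T' = Lambda)).
have Hmax : psi_d psi T' <= H_psiA psi A n.
  have [B HB] := finite_bound Hdef.
  have hs : H_set psi A n (psi_d psi T') by exists T'.
  have [_ hm] := max_spec hs HB.
  exact: hm.
apply: leq_trans Hmax; rewrite psid.
case: HPd => G [[ndtG sG detG] cG]; rewrite -cG.
case: G sG ndtG detG cG => [|t [|]] //= _ ndtG detG _.
have detT : det_node t by case/andP: detG.
have tpt : tree_paths [:: t] = node_paths t by rewrite /tree_paths /= cats0.
case: (ndtG) => _ attrG covG corrG.
pose Rv := fun l v => exists2 r, r \in trows T & v = proj D T r.1 /\
   (forall l', l' \in a -> l' != l -> value T r.1 l'.1 = l'.2).
have subt : {subset node_attrs t <= C}.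
  move=> x xin; rewrite -colsT'; apply: attrG; by rewrite /tree_attrs /= cats0.
have CA : forall f, f \in C -> f \in map fst a.
  move=> f; rewrite /C /Ccols /remaining mem_filter /D /Dset mem_filter => /andP[g1 g2].
  by move: g1; rewrite g2 andbT negbK.
have Hval : forall l l' v v' f, l \in a -> l' \in a -> Rv l v -> Rv l' v' -> f \in C ->
      f != l.1 -> f != l'.1 -> value T' v f = value T' v' f.
  move=> l l' v v' f la l'a [r rin [-> Hr]] [r' r'in [-> Hr']] fC fl fl'.
  have fa := CA f fC.
  rewrite !Tp_value //.
  case/mapP: fa => lf lfa ef; subst f.
  have n1 : lf != l by apply/negP => /eqP E; subst lf; rewrite eqxx in fl.
  have n2 : lf != l' by apply/negP => /eqP E; subst lf; rewrite eqxx in fl'.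
  by rewrite Hr // Hr'.
have Hcov : forall l, l \in a -> exists v, Rv l v /\
      exists2 p, p \in node_paths t & agrees T' v p.1 /\ p.2 = l.1.
  move=> l la; have [r rin [H1 H2]] := irr_row Hi la.
  exists (proj D T r.1); split; first by exists r.
  have xin := Tp_in an sa rin.
  have [p pin xsub] := covG _ xin.
  have [_ ag] := sub_rows xsub.
  exists p; first by rewrite -tpt.
  split => //.
  case: (corrG p pin) => [E|Pi]; first by move: xsub; rewrite E.
  have hp := in_Pi_elim Pi xsub; move: hp => /= hp.
  have lin : l.1 \in sdiff C a (proj D T r.1).
    apply/mapP; exists l => //; rewrite mem_filter la andbT.
    by rewrite -Tp_valC // Tp_value //; exact: map_f.
  have ne0 : sdiff C a (proj D T r.1) != [::] by apply/negP => /eqP E; rewrite E in lin.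
  have := nu_out hp ne0; case/mapP => l'; rewrite mem_filter => /andP[hl' l'a] ->.
  case: (eqVneq l' l) => [->//|ne].
  by move: hl'; rewrite -Tp_valC // Tp_value ?H1 ?eqxx //; exact: map_f.
case: (lb detT subt ufa Hval Hcov) => [h1|[p pin hp]]; first by rewrite ltnNge h1 in h2.
have : size a - 1 <= size p.1 by rewrite leq_subLR add1n.
move/leq_trans; apply.
apply: (leq_trans _ (leq_bigmax_seq (F := fun q => psi_word psi q.1) p _ isT)).
  by rewrite /psi_word; apply: leq_trans (bnd _); rewrite size_map.
by rewrite tpt.
Qed.

Lemma Lambda_in (A : table -> Prop) : closed_class A -> A Lambda.
Proof.
move=> [wfA [[T0 A0] clA]]; apply/clA; exists T0; split => //.
exists (tcols T0), (fun _ => [fset 0%N]); split => //; split.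
  move=> v _; apply/negP => /eqP E; by have := in_fset1 0%N 0%N; rewrite E in_fset0 eqxx.
rewrite /opI.
have -> : remaining (tcols T0) T0 = [::].
  rewrite /remaining; case E: [seq f <- tcols T0 | f \notin tcols T0] => [//|x s].
  have : x \in [seq f <- tcols T0 | f \notin tcols T0] by rewrite E mem_head.
  by rewrite mem_filter => /andP[/negP].
by [].
Qed.

Unset Implicit Arguments.
Theorem lemma15 (A : table -> Prop) (psi : seq nat -> nat) :
  closed_class A -> nontrivial A -> bounded_measure psi ->
  (forall n, H_defined psi A n) ->
  forall n, G_defined psi A n /\ G_psiA psi A n - 1 <= H_psiA psi A n.
Proof.
move=> Hcl _ Hb HH n.
have AL := Lambda_in Hcl.
have [B HB] := finite_bound (HH n).
have hs0 : H_set psi A n 0.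
  exists Lambda; split => //; rewrite /psi_a /psi_d.
  by destruct (excluded_middle_informative (Lambda = Lambda)).
have [_ Hge] := max_spec hs0 HB.
set H := H_psiA psi A n.
have Gb : forall k, G_set psi A n k -> k <= H.+1.
  move=> k [T [[AT mT] <-]]; rewrite /G_tab.
  destruct (excluded_middle_informative (T = Lambda)) => //.
  destruct (excluded_middle_informative (exists a, irreducible T a)) as [[a Ha]|] => //.
  have QB : forall j, (fun k => exists a, irreducible T a /\ size a = k) j -> j <= H.+1.
    move=> j [a' [Ha' <-]]; rewrite -add1n -leq_subLR.
    exact: (main_bound Hcl Hb (HH n) AT mT Ha').
  have [[a' [Ha' <-]] _] := max_spec (ex_intro _ a (conj Ha erefl)) QB.
  exact: QB (ex_intro _ a' (conj Ha' erefl)).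
split; first exact: bound_finite Gb.
have gs0 : G_set psi A n 0.
  exists Lambda; split; first by split => //; rewrite /m_psi /= big_nil.
  by rewrite /G_tab; destruct (excluded_middle_informative (Lambda = Lambda)).
have [hG _] := max_spec gs0 Gb.
by rewrite leq_subLR add1n; exact: Gb.
Qed.
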